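(* Let $g: X_1\times\cdots\times X_n\to A$ be an $n$-person game form, let $i\in[n]$, let $j\neq k$ be two elements of $X_i$, and let $y^1,y^2,y^3,y^4\in X_{-i}$ (not necessarily pairwise distinct) be such that (1) $g(j,y^1)\neq g(j,y^2)$; (2) $g(k,y^3)\neq g(k,y^4)$; (3) $g(j,y^t)\neq g(k,y^t)$ for all $t=1,2,3,4$. Then $g$ is not weakly totally tight.
   Context: Let $X_1,\dots,X_n$ and $A$ be finite nonempty sets. An $n$-person game form is a map $g: X_1\times\cdots\times X_n\to A$; elements $x=(x_1,\dots,x_n)$ of $X=X_1\times\cdots\times X_n$ are strategy profiles, elements of $A$ are outcomes. For a direction (player) $i\in[n]$ write $X_{-i}=\prod_{t\neq i}X_t$, and for $s\in X_i$, $y\in X_{-i}$ write $(s,y)$ for the profile whose $i$-th coordinate is $s$ and whose other coordinates are given by $y$. The game form $g$ is weakly totally tight (WTT) if for every $i\in[n]$, all $s\neq s'$ in $X_i$ and all $y\neq y'$ in $X_{-i}$, at least one of the equalities $g(s,y)=g(s,y')$, $g(s,y)=g(s',y)$, $g(s',y')=g(s',y)$, $g(s',y')=g(s,y')$ holds. *)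

(* Defs.v *)
From mathcomp Require Import all_boot.
Set Implicit Arguments. Unset Strict Implicit. Unset Printing Implicit Defensive.

Definition profile (n : nat) (X : 'I_n -> finType) := forall t : 'I_n, X t.

Definition minus_profile (n : nat) (X : 'I_n -> finType) (i : 'I_n) :=
  forall t : {t : 'I_n | t != i}, X (sval t).

(* (s, y): the profile with i-th coordinate s and other coordinates from y. *)
Definition join (n : nat) (X : 'I_n -> finType) (i : 'I_n) (s : X i)
  (y : minus_profile X i) : profile X :=
  fun t => match (t =P i) with
           | ReflectT e => eq_rect_r X s e
           | ReflectF ne => y (exist _ t (introN eqP ne))
           end.

Definition weakly_totally_tight (n : nat) (X : 'I_n -> finType) (A : finType)
  (g : profile X -> A) : Prop :=
  forall (i : 'I_n) (s s' : X i) (y y' : minus_profile X i),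
    s <> s' -> y <> y' ->
    g (join s y) = g (join s y') \/ g (join s y) = g (join s' y) \/
    g (join s' y') = g (join s' y) \/ g (join s' y') = g (join s y').

(* Main.v *)
Require Import Defs.
From mathcomp Require Import all_boot.
From Stdlib Require Import Classical.

Theorem mainTheorem1 (n : nat) (X : 'I_n -> finType) (A : finType)
  (HX : forall t : 'I_n, 0 < #|X t|) (HA : 0 < #|A|)
  (g : profile X -> A) (i : 'I_n) (j k : X i) (y1 y2 y3 y4 : minus_profile X i) :
  j <> k ->
  g (join j y1) <> g (join j y2) ->
  g (join k y3) <> g (join k y4) ->
  g (join j y1) <> g (join k y1) ->
  g (join j y2) <> g (join k y2) ->
  g (join j y3) <> g (join k y3) ->
  g (join j y4) <> g (join k y4) ->
  ~ weakly_totally_tight g.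
Proof.
move=> hjk h12 h34 d1 d2 d3 d4 W.
have P : forall y y', g (join j y) <> g (join k y) -> g (join j y') <> g (join k y') ->
  g (join j y) = g (join j y') \/ g (join k y) = g (join k y').
  move=> y y' dy dy'.
  destruct (classic (y = y')) as [e|ne]; first by subst; left.
  have := W i j k y y' hjk ne.
  case=> [->|[e|[e|e]]]; [by left | congruence | by right | congruence].
have := P _ _ d1 d2; have := P _ _ d3 d4; have := P _ _ d1 d3;
have := P _ _ d1 d4; have := P _ _ d2 d3; have := P _ _ d2 d4.
case=> ?; case=> ?; case=> ?; case=> ?; case=> ?; case=> ?; congruence.
Qed.
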